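(* Let $\mathcal A$ be a finite set, $\mathcal R$ a finite subset of $F(\mathcal A)$ and $\phi:F(\mathcal A)\to F(\mathcal A)$ a homomorphism. Then there are a finite set $\mathcal B$, a finite set $\mathcal R'\subset F(\mathcal B)$, a monomorphism $\phi':F(\mathcal B)\to F(\mathcal B)$ and an isomorphism $$\rho:\langle t,\mathcal A:\mathcal R,\ t^{-1}at=\phi(a)\ (a\in\mathcal A)\rangle\to\langle t,\mathcal B:\mathcal R',\ t^{-1}bt=\phi'(b)\ (b\in\mathcal B)\rangle.$$ Furthermore, if $q_{\mathcal A}:F(\mathcal A\cup\{t\})\to\langle t,\mathcal A:\mathcal R,\ t^{-1}at=\phi(a)\rangle$ and $q_{\mathcal B}:F(\mathcal B\cup\{t\})\to\langle t,\mathcal B:\mathcal R',\ t^{-1}bt=\phi'(b)\rangle$ are the natural projections, there is an epimorphism $\rho':F(\mathcal A\cup\{t\})\to F(\mathcal B\cup\{t\})$ such that (1) $\rho'(t)=t$; (2) $q_{\mathcal B}\circ\rho'=\rho\circ q_{\mathcal A}$; (3) $\rho'(\mathcal R)=\mathcal R'$, $\rho'(N_{F(\mathcal A)}(\mathcal R))=N_{F(\mathcal B)}(\mathcal R')$ and $\rho'(N_{F(\mathcal A\cup\{t\})}(\mathcal R))=N_{F(\mathcal B\cup\{t\})}(\mathcal R')$.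
   Context: $F(S)$ denotes the free group on a set $S$; for a group $H$ and subset $S$, $N_H(S)$ denotes the normal closure of $S$ in $H$. *)

(* Defs.v *)
From mathcomp Require Import all_boot.
Set Implicit Arguments. Unset Strict Implicit. Unset Printing Implicit Defensive.

Section FreeGroup.
Variable A : eqType.

(* a letter is a generator together with an "inverse" flag *)
Definition letter := (A * bool)%type.
Definition linv (x : letter) : letter := (x.1, ~~ x.2).

Definition reduced (w : seq letter) : bool :=
  sorted (fun x y => y != linv x) w.

Definition push (x : letter) (s : seq letter) : seq letter :=
  if s is y :: s' then (if y == linv x then s' else x :: s) else [:: x].
Definition red (w : seq letter) : seq letter := foldr push [::] w.

Lemma reduced_push x s : reduced s -> reduced (push x s).
Proof.
case: s => [|y s] //= Hs.
case: eqP => [_|/eqP Hy].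
  by case: s Hs => //= z s /andP[].
by rewrite /reduced /= Hy.
Qed.

Lemma reduced_red w : reduced (red w).
Proof. by elim: w => [|x w IH] //=; apply: reduced_push. Qed.

Definition FG := {w : seq letter | reduced w}.
Definition fg_one : FG := exist _ [::] isT.
Definition fg_mul (u v : FG) : FG := exist _ (red (val u ++ val v)) (reduced_red _).
Definition fg_inv (u : FG) : FG :=
  exist _ (red (rev (map linv (val u)))) (reduced_red _).
Definition fg_gen (a : A) : FG := exist _ [:: (a, false)] isT.

Inductive ncl (S : FG -> Prop) : FG -> Prop :=
| ncl_base s : S s -> ncl S s
| ncl_one : ncl S fg_one
| ncl_mul u v : ncl S u -> ncl S v -> ncl S (fg_mul u v)
| ncl_inv u : ncl S u -> ncl S (fg_inv u)
| ncl_conj g u : ncl S u -> ncl S (fg_mul (fg_inv g) (fg_mul u g)).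

End FreeGroup.

Arguments fg_one {A}.

Definition is_hom (A B : eqType) (f : FG A -> FG B) : Prop :=
  forall u v, f (fg_mul u v) = fg_mul (f u) (f v).

Definition surj (X Y : Type) (f : X -> Y) : Prop := forall y, exists x, f x = y.

(* natural inclusion F(A) -> F(A ∪ {t}), where t is the extra letter None *)
Definition emb (A : eqType) (u : FG A) : FG (option A) :=
  exist _ (red (map (fun x : letter A => (Some x.1, x.2)) (val u))) (reduced_red _).

Definition tt_gen (A : eqType) : FG (option A) := fg_gen None.

Definition hnn_rels (A : eqType) (R : seq (FG A)) (phi : FG A -> FG A)
  : FG (option A) -> Prop :=
  fun w => (exists2 r, r \in R & w = emb r) \/
           (exists a : A, w = fg_mul (fg_mul (fg_mul (fg_inv (tt_gen A))
                                    (emb (fg_gen a))) (tt_gen A))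
                                  (fg_inv (emb (phi (fg_gen a))))).

(* kernel of the natural projection q : F(A ∪ {t}) -> presented group *)
Definition hnnN (A : eqType) (R : seq (FG A)) (phi : FG A -> FG A) :=
  ncl (hnn_rels R phi).

(* the presented group F/N is represented by words; q(u) = q(v) iff u v^-1 ∈ N *)
Definition peq (A : eqType) (N : FG A -> Prop) (u v : FG A) : Prop :=
  N (fg_mul u (fg_inv v)).

(* f (on representatives) induces an isomorphism F(A)/N -> F(B)/M *)
Definition quot_iso (A B : eqType) (N : FG A -> Prop) (M : FG B -> Prop)
  (f : FG A -> FG B) : Prop :=
  [/\ (forall u v, peq N u v -> peq M (f u) (f v)),
      (forall u v, peq M (f (fg_mul u v)) (fg_mul (f u) (f v))),
      (forall u v, peq M (f u) (f v) -> peq N u v)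
    & (forall y, exists x, peq M (f x) y)].

(* Main.v *)
Require Import Defs.
From mathcomp Require Import all_boot zify.
From Stdlib Require Import Classical.
Set Implicit Arguments. Unset Strict Implicit. Unset Printing Implicit Defensive.

Section Basics.
Variable A : eqType.
Implicit Types (x y : letter A) (s t u v w : seq (letter A)).

Lemma linvK x : linv (linv x) = x.
Proof. by case: x => a b; rewrite /linv /= negbK. Qed.

Lemma linv_inj : injective (@linv A).
Proof. by move=> x y /(congr1 (@linv A)); rewrite !linvK. Qed.

Lemma linv_neq x : (linv x == x) = false.
Proof. by case: x => a b; apply/eqP; rewrite /linv /=; case; case: b. Qed.

Lemma reduced_cons x s :
  reduced (x :: s) = (if s is y :: _ then y != linv x else true) && reduced s.
Proof. by case: s. Qed.

Lemma reduced_behead x s : reduced (x :: s) -> reduced s.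
Proof. by rewrite reduced_cons => /andP[]. Qed.

Lemma red_reduced s : reduced s -> red s = s.
Proof.
elim: s => [|x s IH] // Hs /=.
rewrite IH; last exact: reduced_behead Hs.
move: Hs; rewrite reduced_cons; case: s {IH} => [|y s] //= /andP[Hy _].
by rewrite (negbTE Hy).
Qed.

Lemma push_cancel x s : reduced s -> push x (push (linv x) s) = s.
Proof.
case: s => [|y s] Hs; first by rewrite /= eqxx.
rewrite /= linvK; case: eqP => [Ey|/eqP Hy] /=.
  subst y.
  case: s Hs => [|z s] //= /andP[Hz _].
  by rewrite (negbTE Hz).
by rewrite eqxx.
Qed.

Lemma reduced_foldr s u : reduced s -> reduced (foldr (@push A) s u).
Proof. by move=> Hs; elim: u => [|x u IH] //=; apply: reduced_push. Qed.

Lemma foldr_push_push s x r : reduced s -> reduced r ->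
  foldr (@push A) s (push x r) = push x (foldr (@push A) s r).
Proof.
move=> Hs; case: r => [|y r] //= Hr.
case: eqP => [->|_] //=.
by rewrite push_cancel // reduced_foldr.
Qed.

Lemma foldr_push_red s u : reduced s -> foldr (@push A) s (red u) = foldr (@push A) s u.
Proof.
move=> Hs; elim: u => [|x u IH] //=.
by rewrite foldr_push_push // ?IH // reduced_red.
Qed.

Lemma red_cat u v : red (u ++ v) = foldr (@push A) (red v) u.
Proof. by rewrite /red foldr_cat. Qed.

Lemma red_redl u v : red (red u ++ v) = red (u ++ v).
Proof. by rewrite !red_cat foldr_push_red // reduced_red. Qed.

Lemma red_redr u v : red (u ++ red v) = red (u ++ v).
Proof. by rewrite !red_cat (red_reduced (reduced_red v)). Qed.

Lemma red_red u : red (red u) = red u.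
Proof. exact: red_reduced (reduced_red u). Qed.

Definition winv s := rev (map (@linv A) s).

Lemma winv_cat s t : winv (s ++ t) = winv t ++ winv s.
Proof. by rewrite /winv map_cat rev_cat. Qed.

Lemma winvK s : winv (winv s) = s.
Proof. by rewrite /winv map_rev revK -map_comp (eq_map linvK) map_id. Qed.

Lemma size_winv s : size (winv s) = size s.
Proof. by rewrite /winv size_rev size_map. Qed.

Lemma winv_cons x s : winv (x :: s) = rcons (winv s) (linv x).
Proof. by rewrite /winv /= rev_cons. Qed.

Lemma winv_rcons x s : winv (rcons s x) = linv x :: winv s.
Proof. by rewrite /winv map_rcons rev_rcons. Qed.

Lemma reduced_winv s : reduced s -> reduced (winv s).
Proof.
move=> Hs; rewrite /reduced /winv rev_sorted sorted_map.
apply: sub_sorted Hs => x y /= H; apply/eqP => E; move/eqP: H; apply.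
by rewrite E linvK.
Qed.


Lemma red_cancel u t : red (u ++ winv u ++ t) = red t.
Proof.
elim: u t => [|x u IH] t //=.
rewrite winv_cons -cats1 -catA /=.
rewrite (IH ([:: linv x] ++ t)) /=.
by rewrite push_cancel ?reduced_red.
Qed.

Lemma red_cancel2 u : red (u ++ winv u) = [::].
Proof. by rewrite -[u ++ _]cats0 -catA red_cancel. Qed.

Lemma red_cancel3 u : red (winv u ++ u) = [::].
Proof. by rewrite -{2}[u]winvK red_cancel2. Qed.

End Basics.

Section Group.
Variable A : eqType.
Notation G := (FG A).
Implicit Types (x : letter A) (u v w g : G).

Definition lett x : G := exist _ [:: x] isT.

Lemma fgE u v : val u = val v -> u = v.
Proof. exact: val_inj. Qed.

Lemma val_mul u v : val (fg_mul u v) = red (val u ++ val v).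
Proof. by []. Qed.

Lemma val_inv u : val (fg_inv u) = winv (val u).
Proof. by rewrite /= red_reduced //; apply: reduced_winv; case: u. Qed.

Lemma valP' u : reduced (val u).
Proof. by case: u. Qed.

Lemma fmulA u v w : fg_mul u (fg_mul v w) = fg_mul (fg_mul u v) w.
Proof. by apply: fgE; rewrite !val_mul red_redl red_redr catA. Qed.

Lemma fmul1g u : fg_mul fg_one u = u.
Proof. by apply: fgE; rewrite val_mul /= red_reduced // valP'. Qed.

Lemma fmulg1 u : fg_mul u fg_one = u.
Proof. by apply: fgE; rewrite val_mul /= cats0 red_reduced // valP'. Qed.

Lemma fmulVg u : fg_mul (fg_inv u) u = fg_one.
Proof. by apply: fgE; rewrite val_mul val_inv red_cancel3. Qed.

Lemma fmulgV u : fg_mul u (fg_inv u) = fg_one.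
Proof. by apply: fgE; rewrite val_mul val_inv red_cancel2. Qed.

Lemma finvK u : fg_inv (fg_inv u) = u.
Proof. by apply: fgE; rewrite !val_inv winvK. Qed.

Lemma fmulKg u v : fg_mul (fg_inv u) (fg_mul u v) = v.
Proof. by rewrite fmulA fmulVg fmul1g. Qed.

Lemma fmulKVg u v : fg_mul u (fg_mul (fg_inv u) v) = v.
Proof. by rewrite fmulA fmulgV fmul1g. Qed.

Lemma fmulgK u v : fg_mul (fg_mul v u) (fg_inv u) = v.
Proof. by rewrite -fmulA fmulgV fmulg1. Qed.

Lemma fmulgKV u v : fg_mul (fg_mul v (fg_inv u)) u = v.
Proof. by rewrite -fmulA fmulVg fmulg1. Qed.

Lemma inv_uniq u v : fg_mul u v = fg_one -> v = fg_inv u.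
Proof. by move=> H; rewrite -[v](fmulKg u) H fmulg1. Qed.

Lemma finvM u v : fg_inv (fg_mul u v) = fg_mul (fg_inv v) (fg_inv u).
Proof.
symmetry; apply: inv_uniq.
by rewrite -fmulA (fmulA v) fmulgV fmul1g fmulgV.
Qed.

Lemma finv1 : fg_inv (@fg_one A) = fg_one.
Proof. by apply: fgE. Qed.

Lemma mul_cancel u v w : fg_mul u v = fg_mul u w -> v = w.
Proof. by move=> H; rewrite -[v](fmulKg u) H fmulKg. Qed.

Lemma lett_gen a : lett (a, false) = fg_gen a.
Proof. by []. Qed.

Lemma lett_inv a : lett (a, true) = fg_inv (fg_gen a).
Proof. by apply: fgE. Qed.

Lemma lett_linv x : lett (linv x) = fg_inv (lett x).
Proof. by apply: fgE. Qed.

Lemma fg_cons x s (H : reduced (x :: s)) :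
  exist _ (x :: s) H = fg_mul (lett x) (exist _ s (reduced_behead H)) :> G.
Proof. by apply: fgE; rewrite val_mul; change (x :: s = red (x :: s)); rewrite red_reduced. Qed.

Lemma FG_ind (P : G -> Prop) : P fg_one ->
  (forall x w, P w -> P (fg_mul (lett x) w)) -> forall w, P w.
Proof.
move=> P1 PS [s Hs]; elim: s Hs => [|x s IH] Hs.
  by rewrite (_ : exist _ _ _ = fg_one) //; apply: fgE.
by rewrite fg_cons; apply: PS.
Qed.

End Group.

Section Homs.
Variables A B : eqType.
Implicit Types (f g : FG A -> FG B).

Lemma hom1 f : is_hom f -> f fg_one = fg_one.
Proof.
move=> Hf; have E : f fg_one = fg_mul (f fg_one) (f fg_one) by rewrite -Hf fmul1g.
by apply: (@mul_cancel _ (f fg_one)); rewrite fmulg1 -E.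
Qed.

Lemma homV f u : is_hom f -> f (fg_inv u) = fg_inv (f u).
Proof. by move=> Hf; apply: inv_uniq; rewrite -Hf fmulgV hom1. Qed.

Lemma hom_lett f x : is_hom f ->
  f (lett x) = if x.2 then fg_inv (f (fg_gen x.1)) else f (fg_gen x.1).
Proof. by case: x => a [] Hf; rewrite ?lett_inv ?homV. Qed.

Lemma hom_eq f g : is_hom f -> is_hom g ->
  (forall a, f (fg_gen a) = g (fg_gen a)) -> forall w, f w = g w.
Proof.
move=> Hf Hg E; apply: FG_ind; first by rewrite !hom1.
by move=> x w IH; rewrite Hf Hg IH (hom_lett _ Hf) (hom_lett _ Hg) E.
Qed.

End Homs.

Lemma hom_comp (A B C : eqType) (f : FG A -> FG B) (g : FG B -> FG C) :
  is_hom f -> is_hom g -> is_hom (fun w => g (f w)).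
Proof. by move=> Hf Hg u v; rewrite Hf Hg. Qed.

Lemma hom_id (A : eqType) : is_hom (fun w : FG A => w).
Proof. by []. Qed.

Lemma hom_iter (A : eqType) (f : FG A -> FG A) n : is_hom f -> is_hom (iter n f).
Proof. by move=> Hf; elim: n => [|n IH] u v //=; rewrite IH Hf. Qed.

Section Ext.
Variables A B : eqType.
Variable f : A -> FG B.

Definition Yw (x : letter A) : seq (letter B) :=
  if x.2 then winv (val (f x.1)) else val (f x.1).

Lemma reduced_Y x : reduced (Yw x).
Proof. by rewrite /Yw; case: ifP => _; [apply: reduced_winv|]; apply: valP'. Qed.

Lemma Y_linv x : Yw (linv x) = winv (Yw x).
Proof. by case: x => a [] //=; rewrite /Yw /= winvK. Qed.

Definition flatY (s : seq (letter A)) := flatten (map Yw s).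

Lemma red_flatY_push x r : reduced r ->
  red (flatY (push x r)) = red (flatY (x :: r)).
Proof.
case: r => [|y r] // _ /=.
case: eqP => [->|] //.
by rewrite /flatY /= Y_linv catA -catA red_cancel.
Qed.

Lemma red_flatY s : red (flatY (red s)) = red (flatY s).
Proof.
elim: s => [|x s IH] //.
rewrite [red (x :: s)]/= red_flatY_push ?reduced_red //.
by rewrite /flatY /= -red_redr -/(flatY _) IH red_redr.
Qed.

Definition ext (w : FG A) : FG B := exist _ (red (flatY (val w))) (reduced_red _).

Lemma ext_hom : is_hom ext.
Proof.
move=> u v; apply: fgE; rewrite !val_mul /= red_flatY red_redl red_redr.
by rewrite /flatY map_cat flatten_cat.
Qed.

Lemma ext_gen a : ext (fg_gen a) = f a.
Proof. by apply: fgE; rewrite /= /flatY /= cats0 /Yw /= red_reduced // valP'. Qed.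

Lemma val_ext_lett x : val (ext (lett x)) = Yw x.
Proof. by rewrite /= /flatY /= cats0 red_reduced // reduced_Y. Qed.

End Ext.

Lemma hom_ext (A B : eqType) (f : FG A -> FG B) : is_hom f ->
  forall w, f w = ext (fun a => f (fg_gen a)) w.
Proof. by move=> Hf; apply: hom_eq => //; [apply: ext_hom | move=> a; rewrite ext_gen]. Qed.

Section NCL.
Variables (A : eqType) (S : FG A -> Prop).
Notation N := (ncl S).
Implicit Types (u v w g : FG A).

Lemma ncl_conjr g u : N u -> N (fg_mul g (fg_mul u (fg_inv g))).
Proof. by move=> H; have := ncl_conj (fg_inv g) H; rewrite finvK. Qed.

Lemma peq_refl u : peq N u u.
Proof. by rewrite /peq fmulgV; apply: ncl_one. Qed.

Lemma peq_sym u v : peq N u v -> peq N v u.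
Proof. by move=> H; have := ncl_inv H; rewrite finvM finvK. Qed.

Lemma peq_trans u v w : peq N u v -> peq N v w -> peq N u w.
Proof. by move=> H1 H2; have := ncl_mul H1 H2; rewrite -fmulA fmulKg. Qed.

Lemma peq_mul u1 v1 u2 v2 : peq N u1 v1 -> peq N u2 v2 ->
  peq N (fg_mul u1 u2) (fg_mul v1 v2).
Proof.
move=> H1 H2; have := ncl_mul H1 (ncl_conjr v1 H2).
by rewrite -!fmulA fmulKg /peq finvM -!fmulA.
Qed.

Lemma peq_inv u v : peq N u v -> peq N (fg_inv u) (fg_inv v).
Proof.
move=> /peq_sym H; have := ncl_conj u H.
by rewrite /peq finvK fmulgKV.
Qed.

Lemma peq_N u v : peq N u v -> N v -> N u.
Proof. by move=> H1 H2; have := ncl_mul H1 H2; rewrite fmulgKV. Qed.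

Lemma N_peq1 u : N u <-> peq N u fg_one.
Proof. by rewrite /peq finv1 fmulg1. Qed.

End NCL.

Lemma peq_hom (A B : eqType) (S : FG B -> Prop) (f g : FG A -> FG B) :
  is_hom f -> is_hom g -> (forall a, peq (ncl S) (f (fg_gen a)) (g (fg_gen a))) ->
  forall w, peq (ncl S) (f w) (g w).
Proof.
move=> Hf Hg E; apply: FG_ind; first by rewrite !hom1 //; apply: peq_refl.
move=> x w IH; rewrite Hf Hg; apply: peq_mul => //.
by rewrite (hom_lett _ Hf) (hom_lett _ Hg); case: ifP => _; [apply: peq_inv|]; apply: E.
Qed.

Lemma ncl_hom (A B : eqType) (f : FG A -> FG B) (S : FG A -> Prop) (T : FG B -> Prop) :
  is_hom f -> (forall s, S s -> ncl T (f s)) -> forall u, ncl S u -> ncl T (f u).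
Proof.
move=> Hf HS u; elim => {u} [s /HS //| |u v _ Hu _ Hv|u _ Hu|g u _ Hu].
- by rewrite hom1 //; apply: ncl_one.
- by rewrite Hf; apply: ncl_mul.
- by rewrite homV //; apply: ncl_inv.
- by rewrite !Hf homV //; apply: ncl_conj.
Qed.

Lemma ncl_surj (A B : eqType) (f : FG A -> FG B) (S : seq (FG A)) :
  is_hom f -> surj f -> forall v,
  (exists2 w, ncl (fun x => x \in S) w & f w = v) <-> ncl (fun x => x \in map f S) v.
Proof.
move=> Hf Sf v; split.
  case=> w Hw <-; apply: (ncl_hom Hf) Hw => s Hs.
  by apply: ncl_base; apply: map_f.
elim => {v} [s /mapP[w Hw ->]| |u v _ [u' Hu' <-] _ [v' Hv' <-]|u _ [u' Hu' <-]|g u _ [u' Hu' <-]].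
- by exists w => //; apply: ncl_base.
- by exists fg_one; [apply: ncl_one | apply: hom1].
- by exists (fg_mul u' v'); [apply: ncl_mul | rewrite Hf].
- by exists (fg_inv u'); [apply: ncl_inv | rewrite homV].
- have [g' <-] := Sf g.
  by exists (fg_mul (fg_inv g') (fg_mul u' g')); [apply: ncl_conj | rewrite !Hf homV].
Qed.

Section Canc.
Variable A : eqType.
Implicit Types (x y : letter A) (s t u v w : seq (letter A)).

Fixpoint lcp s t : nat :=
  match s, t with
  | x :: s', y :: t' => if x == y then (lcp s' t').+1 else 0
  | _, _ => 0
  end.

Definition canc u v := lcp (winv u) v.

Lemma lcp_take_cat a b r k : lcp a b < k -> k <= size a -> lcp (take k a ++ r) b = lcp a b.
Proof.
elim: a b k => [|x a IH] [|y b] [|k] //=. by case: ifP => // _ H1 H2; rewrite IH.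
Qed.

Lemma lcp_size s t : lcp s t <= size s /\ lcp s t <= size t.
Proof.
elim: s t => [|x s IH] [|y t] //=; case: ifP => // _.
by have [] := IH t.
Qed.

Lemma lcp_take s t : take (lcp s t) s = take (lcp s t) t.
Proof. by elim: s t => [|x s IH] [|y t] //=; case: ifP => // /eqP -> /=; rewrite IH. Qed.

Lemma reduced_rcons s x : reduced (rcons s x) ->
  reduced s /\ (if s is h :: t then x != linv (last h t) else true).
Proof.
case: s => [|h t] //; rewrite /reduced /= rcons_path => /andP[-> H].
by split.
Qed.

Lemma reduced_catc s x v : reduced (rcons s x) -> reduced v ->
  (if v is y :: _ then y != linv x else true) -> reduced (s ++ x :: v).
Proof.
move=> H1 H2 H3; rewrite /reduced in H1 H2 *; rewrite sorted_cat_cons H1 /=.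
by case: v H2 H3 => [|y v] //= H2 ->.
Qed.

Lemma push_red x s : reduced (x :: s) -> push x s = x :: s.
Proof.
case: s => [|y s] // H; move: H; rewrite reduced_cons => /andP[Hy _] /=.
by rewrite (negbTE Hy).
Qed.

Lemma foldr_push_cat s u : reduced (u ++ s) -> foldr (@push A) s u = u ++ s.
Proof.
elim: u => [|x u IH] // H /=.
rewrite IH; last exact: reduced_behead H.
exact: push_red.
Qed.

Lemma winv_drop n s : winv (drop n s) = take (size s - n) (winv s).
Proof. by rewrite /winv map_drop rev_drop size_map. Qed.

Lemma RED u v : reduced u -> reduced v ->
  red (u ++ v) = take (size u - canc u v) u ++ drop (canc u v) v.
Proof.
elim/last_ind: u v => [|u1 x IH] v Hu Hv.
  by rewrite /canc /winv /= drop0 red_reduced.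
have [Hu1 _] := reduced_rcons Hu.
rewrite /canc winv_rcons cat_rcons red_cat /= (red_reduced Hv).
case: v Hv => [|y v] Hv /=.
  by rewrite subn0 take_size cats0 foldr_push_cat cats1.
rewrite [linv x == y]eq_sym; case: eqP => [E|/eqP NE] /=.
  have Hv' := reduced_behead Hv.
  have -> : foldr (@push A) v u1 = red (u1 ++ v) by rewrite red_cat (red_reduced Hv').
  rewrite IH // -/(canc u1 v).
  rewrite size_rcons subSS -cats1 takel_cat //.
  by rewrite leq_subr.
rewrite subn0 take_size foldr_push_cat //.
  by rewrite cat_rcons.
by apply: reduced_catc.
Qed.

End Canc.

Section NielsenInj.
Variables (A B : eqType) (f : A -> FG B).
Notation Y := (Yw f).
Definition cc (x y : letter A) := canc (Y x) (Y y).

Hypothesis N0 : forall x, 0 < size (Y x).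
Hypothesis N1 : forall x y, y != linv x -> 2 * cc x y <= size (Y x) /\ 2 * cc x y <= size (Y y).
Hypothesis N2 : forall x y z, y != linv x -> z != linv y -> cc x y + cc y z < size (Y y).

Definition cp (w : seq (letter A)) x := if w is h :: t then cc (last h t) x else 0.

Lemma inv_main w x : reduced (rcons w x) ->
  exists Q, red (flatY f (rcons w x)) = Q ++ drop (cp w x) (Y x).
Proof.
elim/last_ind: w x => [|w y IH] x H.
  by exists [::]; rewrite /flatY /= cats0 (red_reduced (reduced_Y f x)) drop0.
have [Hwy Hxy] := reduced_rcons H.
have [Q EQ] := IH y Hwy.
rewrite /flatY map_rcons flatten_rcons -red_redl -/(flatY f _) EQ.
have HQ : reduced (Q ++ drop (cp w y) (Y y)) by rewrite -EQ reduced_red.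
rewrite RED // ?reduced_Y //.
have Hlt : cc y x < size (Y y) - cp w y.
  rewrite ltn_subRL addnC.
  case: w {IH EQ HQ H} Hwy Hxy => [|h t] Hwy Hxy /=.
    rewrite /= in Hxy.
    have [H1 _] := N1 Hxy.
    by rewrite addn0; have := N0 y; move: H1; lia.
  have [_ Hyl] := reduced_rcons Hwy.
  rewrite /= last_rcons in Hxy.
  by rewrite addnC; apply: N2.
set c := canc _ _.
have -> : c = cc y x.
  rewrite /c /canc winv_cat winv_drop lcp_take_cat ?size_winv ?leq_subr //.
have -> : cp (rcons w y) x = cc y x by case: (w) => [|h t] //=; rewrite last_rcons.
by eexists.
Qed.

Lemma inv_nonempty w : reduced w -> w != [::] -> red (flatY f w) != [::].
Proof.
elim/last_ind: w => [|w x _] // H _.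
have [Q ->] := inv_main H.
rewrite -size_eq0 size_cat size_drop; apply/eqP; move/eqP.
have : cp w x < size (Y x).
  case: w H => [|h t] H /=; first exact: N0.
  have [_ Hl] := reduced_rcons H; rewrite /= in Hl.
  have [_ H2] := N1 Hl; have := N0 x; lia.
move=> H1; rewrite addn_eq0 subn_eq0 => /andP[_ H3]; by rewrite leqNgt H1 in H3.
Qed.

Lemma ext_injective : injective (ext f).
Proof.
move=> u v E.
have E1 : ext f (fg_mul u (fg_inv v)) = fg_one.
  by rewrite ext_hom homV; [rewrite E; apply: fmulgV | apply: ext_hom].
have : val (fg_mul u (fg_inv v)) = [::].
  apply/eqP; apply: contraTT isT => Hn.
  have := inv_nonempty (valP' _) Hn.
  by rewrite -[red _]/(val (ext f (fg_mul u (fg_inv v)))) E1.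
move=> H0.
have : fg_mul u (fg_inv v) = fg_one by apply: fgE.
by move/(congr1 (fun z => fg_mul z v)); rewrite fmulgKV fmul1g.
Qed.

End NielsenInj.

Section Overlap.
Variable A : eqType.
Implicit Types (x y d : letter A) (s t w : seq (letter A)).

Lemma lcp_sym s t : lcp s t = lcp t s.
Proof. by elim: s t => [|x s IH] [|y t] //=; rewrite eq_sym IH. Qed.

Lemma reduced_nth d w i : reduced w -> i.+1 < size w ->
  nth d w i.+1 != linv (nth d w i).
Proof.
elim: w i => [|x w IH] // [|i] H /=.
  by case: w H {IH} => [|y w] //; rewrite reduced_cons => /andP[].
by move=> Hi; apply: IH => //; apply: reduced_behead H.
Qed.

Lemma nth_winv d w i : i < size w ->
  nth d (winv w) i = linv (nth d w (size w - i.+1)).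
Proof.
move=> Hi; rewrite /winv nth_rev ?size_map // (nth_map d) //; lia.
Qed.

Lemma overlap_strict w : reduced w -> w != [::] -> 2 * lcp (winv w) w < size w.
Proof.
move=> Hw Hn; rewrite ltnNge; apply/negP => Hc.
have [d _] : exists d : letter A, True by case: (w) Hn => [|d ?] //; exists d.
set c := lcp (winv w) w in Hc.
have Ht := lcp_take (winv w) w; rewrite -/c in Ht.
have [Hc1 _] := lcp_size (winv w) w; rewrite -/c size_winv in Hc1.
have Hpos : 0 < size w by rewrite lt0n size_eq0.
have Key : forall i, i < c -> nth d w i = linv (nth d w (size w - i.+1)).
  move=> i Hi; rewrite -nth_winv; last by lia.
  by rewrite -(nth_take d Hi) -Ht nth_take.
have := divn_eq (size w) 2; have := ltn_pmod (size w) (isT : 0 < 2).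
set h := size w %/ 2; set b := size w %% 2.
case: b => [|[|b]] // _ E.
  have Hh : 0 < h by lia.
  have := Key h.-1 ltac:(lia).
  have -> : size w - h.-1.+1 = h by lia.
  move=> E2.
  have := reduced_nth d Hw (i := h.-1) ltac:(lia).
  rewrite prednK // E2 linvK eqxx //.
have := Key h ltac:(lia).
have -> : size w - h.+1 = h by lia.
by move/eqP; rewrite eq_sym linv_neq.
Qed.

End Overlap.

Section Code.
Variable T : finType.
Definition cbase := #|T|.+1.

Fixpoint code (s : seq T) : nat :=
  if s is x :: s' then enum_rank x * cbase ^ size s' + code s' else 0.

Lemma code_lt s : code s < cbase ^ size s.
Proof.
elim: s => [|x s IH] //=.
have Hr : enum_rank x < cbase by rewrite /cbase ltnS ltnW.
rewrite expnS.
have : enum_rank x * cbase ^ size s + cbase ^ size s <= cbase * cbase ^ size s.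
  by rewrite addnC -mulSn leq_mul2r Hr orbT.
move=> H; apply: leq_trans H; by rewrite ltn_add2l.
Qed.

Lemma code_cat p r : code (p ++ r) = code p * cbase ^ size r + code r.
Proof.
elim: p => [|x p IH] //=.
by rewrite IH size_cat expnD mulnDl addnA mulnA.
Qed.

Lemma code_inj p q : size p = size q -> code p = code q -> p = q.
Proof.
elim: p q => [|x p IH] [|y q] //= [Es] E.
have Hp := code_lt p; have Hq := code_lt q.
have Hb : 0 < cbase ^ size p by rewrite expn_gt0.
have E1 : enum_rank x = enum_rank y :> nat.
  have := congr1 (fun n => n %/ cbase ^ size p) E.
  rewrite Es in Hb Hp E *.
  by rewrite !divnMDl // !divn_small // !addn0.
have E2 : code p = code q.
  have := congr1 (fun n => n %% cbase ^ size p) E.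
  rewrite Es in Hb Hp E *.
  by rewrite !modnMDl !modn_small.
by rewrite (IH q Es E2) (enum_rank_inj (val_inj E1)).
Qed.

End Code.

Section Mu.
Variable A : finType.
Definition mu (s : seq (letter A)) := code s + code (winv s).

Lemma mu_winv s : mu (winv s) = mu s.
Proof. by rewrite /mu winvK addnC. Qed.

Lemma mu_lt p q r : size p = size q -> size p <= size r -> code p < code q ->
  mu (p ++ r) < mu (q ++ r).
Proof.
move=> Es Hr Hc; rewrite /mu !winv_cat !code_cat !size_winv.
set X := cbase _ ^ size r.
have Hb : 0 < cbase (letter A) by [].
have HXY : cbase (letter A) ^ size p <= X by rewrite leq_pexp2l.
have H1 := code_lt (winv p); rewrite size_winv in H1.
have H2 : code p * X + X <= code q * X by rewrite addnC -mulSn leq_mul2r Hc orbT.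
have H3 : code p * X + code (winv p) < code q * X.
  apply: leq_trans H2; rewrite ltn_add2l; exact: leq_trans H1 HXY.
rewrite -Es; move: H3.
move: (code p * X) (code q * X) => a b.
set Z := (code (winv r) * _); move: Z => c.
lia.
Qed.

End Mu.

Lemma size_red_cat (A : eqType) (a b : seq (letter A)) : reduced a -> reduced b ->
  size (red (a ++ b)) = size a + size b - 2 * canc a b.
Proof.
move=> Ha Hb; rewrite RED // size_cat size_take size_drop.
have [H1 H2] := lcp_size (winv a) b; rewrite size_winv in H1.
rewrite /canc; case: ltnP => H; lia.
Qed.

Section Nielsen.
Variables A A' : finType.
Implicit Types (u : A -> FG A').

Definition PP u := injective (ext u) \/ exists C : finType, #|C| < #|A| /\
  exists (al : FG A -> FG C) (be : FG C -> FG A'),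
    [/\ is_hom al, surj al, is_hom be & forall w, be (al w) = ext u w].

Lemma transfer u (t t' : A -> FG A) :
  (forall w, ext t' (ext t w) = w) -> (forall w, ext t (ext t' w) = w) ->
  PP (fun a => ext u (t a)) -> PP u.
Proof.
move=> K1 K2.
have E : forall w, ext (fun a => ext u (t a)) w = ext u (ext t w).
  apply: hom_eq; [apply: ext_hom | apply: hom_comp; apply: ext_hom |].
  by move=> a; rewrite !ext_gen.
case=> [Hi|[C [HC [al [be [Ha Sa Hb Hab]]]]]].
  left=> x y Exy; rewrite -(K2 x) -(K2 y); congr (ext t _); apply: Hi.
  by rewrite !E !K2.
right; exists C; split=> //; exists (fun w => al (ext t' w)), be; split=> //.
- by apply: hom_comp => //; apply: ext_hom.
- by move=> y; have [x <-] := Sa y; exists (ext t x); rewrite K1.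
- by move=> w; rewrite Hab E K2.
Qed.

Definition mv (k : A) (s : bool) (y : letter A) : A -> FG A :=
  fun a => if a == k then (if s then fg_mul (fg_gen k) (lett y) else fg_mul (lett y) (fg_gen k))
           else fg_gen a.

Lemma ext_mv_lett k s y l : l.1 != k -> ext (mv k s y) (lett l) = lett l.
Proof.
move=> Hy; rewrite (hom_lett _ (ext_hom _)) ext_gen /mv (negbTE Hy).
by case: l Hy => a [] //= _; rewrite lett_inv.
Qed.

Lemma mv_inv k s y : y.1 != k -> forall w, ext (mv k s (linv y)) (ext (mv k s y) w) = w.
Proof.
move=> Hy; apply: hom_eq; [apply: hom_comp; apply: ext_hom | apply: hom_id |].
move=> a; rewrite ext_gen; have [->|Ha] := eqVneq a k.
  have Hy' : (linv y).1 != k by case: y Hy.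
  rewrite {2}/mv eqxx.
  case: s; rewrite ext_hom ext_mv_lett // ext_gen /mv eqxx lett_linv.
    by rewrite -fmulA fmulVg fmulg1.
  by rewrite fmulA fmulgV fmul1g.
by rewrite {2}/mv (negbTE Ha) ext_gen /mv (negbTE Ha).
Qed.

Lemma step u k s y : y.1 != k -> PP (fun a => ext u (mv k s y a)) -> PP u.
Proof.
move=> Hy; apply: transfer (mv k s (linv y)) _ _; first exact: mv_inv.
by move=> w; rewrite -{1}[y]linvK; apply: mv_inv; case: y Hy.
Qed.

Lemma mv_val_other u k s y a : a != k -> ext u (mv k s y a) = u a.
Proof. by move=> Ha; rewrite /mv (negbTE Ha) ext_gen. Qed.

Lemma mv_val_k u k s y :
  ext u (mv k s y k) = if s then fg_mul (u k) (ext u (lett y)) else fg_mul (ext u (lett y)) (u k).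
Proof. by rewrite /mv eqxx; case: s; rewrite ext_hom ext_gen. Qed.

Definition MoveSpec u k (W : FG A') := exists u', (PP u' -> PP u) /\
  (forall a, a != k -> u' a = u a) /\ size (val (u' k)) = size (val W) /\
  mu (val (u' k)) = mu (val W).

Lemma spec_of u k s l (b : bool) W : l.1 != k ->
  (if b then fg_inv (ext u (mv k s l k)) else ext u (mv k s l k)) = W -> MoveSpec u k W.
Proof.
move=> Hl EW; exists (fun a => ext u (mv k s l a)); split; first exact: step.
split; first by move=> a Ha; apply: mv_val_other.
by case: b EW => <-; rewrite ?val_inv ?size_winv ?mu_winv.
Qed.

Lemma ext_lett_inv u x : ext u (lett (linv x)) = fg_inv (ext u (lett x)).
Proof. by rewrite lett_linv homV //; apply: ext_hom. Qed.

Lemma ext_lett_gen u x : ext u (lett x) = if x.2 then fg_inv (u x.1) else u x.1.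
Proof. by rewrite (hom_lett _ (ext_hom _)) ext_gen. Qed.

Lemma left_spec u x y : x.1 != y.1 ->
  MoveSpec u y.1 (fg_mul (ext u (lett x)) (ext u (lett y))).
Proof.
move=> Hxy; case Ey: y.2.
  apply: (@spec_of u y.1 true (linv x) true); first by case: x Hxy.
  rewrite mv_val_k finvM ext_lett_inv finvK; congr fg_mul.
  by rewrite ext_lett_gen Ey.
apply: (@spec_of u y.1 false x false) => //.
by rewrite mv_val_k; congr fg_mul; rewrite ext_lett_gen Ey.
Qed.

Lemma right_spec u x y : x.1 != y.1 ->
  MoveSpec u x.1 (fg_mul (ext u (lett x)) (ext u (lett y))).
Proof.
move=> Hxy; case Ex: x.2.
  apply: (@spec_of u x.1 false (linv y) true); first by rewrite eq_sym; case: y Hxy.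
  rewrite mv_val_k finvM ext_lett_inv finvK; congr fg_mul.
  by rewrite ext_lett_gen Ex.
apply: (@spec_of u x.1 true y false); first by rewrite eq_sym.
by rewrite mv_val_k; congr fg_mul; rewrite ext_lett_gen Ex.
Qed.

Definition tlen u := \sum_(a : A) size (val (u a)).
Definition tcode u := \sum_(a : A) mu (val (u a)).

Lemma sum_change (F G : A -> nat) k : (forall a, a != k -> F a = G a) ->
  \sum_(a : A) F a + G k = \sum_(a : A) G a + F k.
Proof.
move=> E; rewrite [\sum_a F a](bigD1 k) // [\sum_a G a](bigD1 k) //=.
rewrite (eq_bigr G); first lia.
by move=> a /E.
Qed.

End Nielsen.

Lemma lcp_refl (A : eqType) (s : seq (letter A)) : lcp s s = size s.
Proof. by elim: s => [|x s IH] //=; rewrite eqxx IH. Qed.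

Lemma same_idx (A : eqType) (x y : letter A) : x.1 = y.1 -> y != linv x -> y = x.
Proof.
case: x => a b; case: y => a' b' /= <-; rewrite /linv /=.
by case: b; case: b' => //; rewrite eqxx.
Qed.

Section NL2.
Variables A A' : finType.
Implicit Types (u : A -> FG A').

Lemma kill u a0 : val (u a0) = [::] -> PP u.
Proof.
move=> H0; right.
pose C := [the finType of {a : A | a != a0}].
exists C; split.
  rewrite card_sig (eq_card (B := predC1 a0)) // cardC1 ltn_predL.
  by apply/card_gt0P; exists a0.
pose al := ext (fun a : A => if (insub a : option C) is Some c then fg_gen c else fg_one).
pose be := ext (fun c : C => u (val c)).
exists al, be; split.
- exact: ext_hom.
- move=> y; exists (ext (fun c : C => fg_gen (val c)) y).
  apply: (hom_eq (f := fun w => al (ext (fun c : C => fg_gen (val c)) w)) (g := id)) => //.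
    by apply: hom_comp; apply: ext_hom.
  by move=> c; rewrite /al !ext_gen valK.
- exact: ext_hom.
- apply: hom_eq; [apply: hom_comp; apply: ext_hom | apply: ext_hom |].
  move=> a; rewrite /al !ext_gen.
  case: insubP => [c _ <-|]; first by rewrite /be ext_gen.
  move/negbNE/eqP => ->; rewrite hom1; last exact: ext_hom.
  by apply: fgE; rewrite H0.
Qed.

Lemma sizeY u x : size (Yw u x) = size (val (u x.1)).
Proof. by rewrite /Yw; case: ifP; rewrite ?size_winv. Qed.

Lemma muY u x : mu (Yw u x) = mu (val (u x.1)).
Proof. by rewrite /Yw; case: ifP; rewrite ?mu_winv. Qed.

Lemma valW u x y : val (fg_mul (ext u (lett x)) (ext u (lett y))) = red (Yw u x ++ Yw u y).
Proof. by rewrite val_mul !val_ext_lett. Qed.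

Lemma core_step u :
  (forall u', tlen u' < tlen u -> PP u') ->
  (forall u', tlen u' = tlen u -> tcode u' < tcode u -> PP u') -> PP u.
Proof.
move=> IHl IHc.
case: (classic (exists a, val (u a) = [::])) => [[a0 /kill //]|HA].
have N0 : forall x, 0 < size (Yw u x).
  move=> x; rewrite sizeY lt0n size_eq0; apply/eqP => E; apply: HA; by exists x.1.
have self : forall x, 2 * cc u x x < size (Yw u x).
  move=> x; apply: overlap_strict; first exact: reduced_Y.
  by rewrite -size_eq0 -lt0n.
have RY := @reduced_Y _ _ u.
have Dec : forall k (W : FG A'), MoveSpec u k W ->
    size (val W) < size (val (u k)) \/
    (size (val W) = size (val (u k)) /\ mu (val W) < mu (val (u k))) -> PP u.
  move=> k W [u' [Imp [Oth [Sz Mu]]]] H; apply: Imp.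
  have SL : \sum_a size (val (u' a)) + size (val (u k)) = \sum_a size (val (u a)) + size (val (u' k)).
    by apply: sum_change => a Ha; rewrite Oth.
  have SC : \sum_a mu (val (u' a)) + mu (val (u k)) = \sum_a mu (val (u a)) + mu (val (u' k)).
    by apply: sum_change => a Ha; rewrite Oth.
  rewrite Sz Mu in SL SC.
  case: H => [H|[H1 H2]].
    by apply: IHl; rewrite /tlen; lia.
  by apply: IHc; rewrite /tlen /tcode; lia.
case: (classic (exists x y, y != linv x /\
   (size (Yw u x) < 2 * cc u x y \/ size (Yw u y) < 2 * cc u x y))) => [[x [y [Hxy H]]]|HB].
  have Hidx : x.1 != y.1.
    apply/eqP => E; have Eyx := same_idx E Hxy; subst y.
    by have := self x; case: H; lia.
  have Hs := size_red_cat (RY x) (RY y); rewrite -/(cc u x y) in Hs.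
  case: H => H.
    apply: (Dec y.1 _ (left_spec u Hidx)); left.
    by rewrite valW Hs -(sizeY u y); have := N0 y; lia.
  apply: (Dec x.1 _ (right_spec u Hidx)); left.
  by rewrite valW Hs -(sizeY u x); have := N0 x; lia.
have N1 : forall x y, y != linv x -> 2 * cc u x y <= size (Yw u x) /\ 2 * cc u x y <= size (Yw u y).
  move=> x y Hxy; split; rewrite leqNgt; apply/negP => H; apply: HB; exists x, y; split=> //.
    by left.
  by right.
case: (classic (exists x y z, y != linv x /\ z != linv y /\
   size (Yw u y) <= cc u x y + cc u y z)) => [[x [y [z [Hxy [Hyz H]]]]]|HC]; last first.
  left; apply: (ext_injective N0 N1) => x y z Hxy Hyz.
  by rewrite ltnNge; apply/negP => H; apply: HC; exists x, y, z.
have [N1a N1b] := N1 x y Hxy; have [N1c N1d] := N1 y z Hyz.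
set m := cc u x y in N1a N1b H.
have Eyz : cc u y z = m by lia.
have Sy : size (Yw u y) = 2 * m by lia.
have Hm : 0 < m by have := N0 y; lia.
have Hidx1 : x.1 != y.1.
  apply/eqP => E; have Eyx := same_idx E Hxy; subst y.
  by have := self x; rewrite -/m; lia.
have Hidx2 : y.1 != z.1.
  apply/eqP => E; have Ezy := same_idx E Hyz; subst z.
  by have := self y; rewrite Eyz; lia.
set p := take m (Yw u y); set q := drop m (Yw u y).
have Eypq : Yw u y = p ++ q by rewrite cat_take_drop.
have Sp : size p = m by rewrite size_takel // Sy; lia.
have Sq : size q = m by rewrite /q size_drop Sy; lia.
have Hx : winv (Yw u x) = p ++ drop m (winv (Yw u x)).
  have := lcp_take (winv (Yw u x)) (Yw u y); rewrite -/(canc _ _) -/(cc u x y) -/m => E.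
  by rewrite -{1}(cat_take_drop m (winv (Yw u x))) E.
have Hz : Yw u z = winv q ++ drop m (Yw u z).
  have := lcp_take (winv (Yw u y)) (Yw u z); rewrite -/(canc _ _) -/(cc u y z) Eyz => E.
  rewrite -{1}(cat_take_drop m (Yw u z)) -E Eypq winv_cat take_size_cat //.
  by rewrite size_winv.
set rx := drop m (winv (Yw u x)) in Hx.
set z' := drop m (Yw u z) in Hz.
have Hpq : p != winv q.
  apply/eqP => E.
  have E2 : winv (Yw u y) = Yw u y by rewrite Eypq winv_cat E winvK.
  have := self y; rewrite /cc /canc E2 lcp_refl; have := N0 y; lia.
have Hcode : code p != code (winv q).
  apply: contra Hpq => /eqP E; apply/eqP; apply: code_inj => //.
  by rewrite size_winv Sp Sq.
have Srx : size rx = size (Yw u x) - m by rewrite /rx size_drop size_winv.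
have Sz' : size z' = size (Yw u z) - m by rewrite /z' size_drop.
case: (ltngtP (code p) (code (winv q))) Hcode => // Hlt _.
  (* z <- y z *)
  apply: (Dec z.1 _ (left_spec u Hidx2)); right.
  have EW : val (fg_mul (ext u (lett y)) (ext u (lett z))) = p ++ z'.
    rewrite valW RED // -/(cc u y z) Eyz Sy.
    by rewrite (_ : 2 * m - m = m) //; lia.
  rewrite EW -sizeY -muY Hz !size_cat size_winv Sp Sq; split => //.
  apply: mu_lt => //; first by rewrite size_winv Sp Sq.
  by rewrite Sp Sz'; lia.
(* x <- x y *)
apply: (Dec x.1 _ (right_spec u Hidx1)); right.
have Ex : Yw u x = winv rx ++ winv p by rewrite -[Yw u x]winvK Hx winv_cat.
have EW : val (fg_mul (ext u (lett x)) (ext u (lett y))) = winv rx ++ q.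
  rewrite valW RED // -/(cc u x y) -/m.
  rewrite (_ : drop m (Yw u y) = q) //.
  rewrite {2}Ex takel_cat; last by rewrite size_winv Srx.
  by rewrite -Srx -size_winv take_size.
rewrite EW -sizeY -muY Ex !size_cat !size_winv Sp Sq; split => //.
rewrite -mu_winv -[mu (winv rx ++ winv p)]mu_winv !winv_cat !winvK.
apply: mu_lt => //; first by rewrite size_winv Sp Sq.
by rewrite size_winv Sq Srx; lia.
Qed.

Lemma NL u : PP u.
Proof.
have H : forall n m (v : A -> FG A'), tlen v < n -> tcode v < m -> PP v.
  elim=> [|n IHn] // m; elim: m => [|m IHm] // v Hn Hm.
  apply: core_step => v' H.
    by apply: (IHn (tcode v').+1) => //; lia.
  move=> H2; apply: IHm; lia.
exact: (H (tlen u).+1 (tcode u).+1).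
Qed.

End NL2.

Definition CoreSpec (A : finType) (phi : FG A -> FG A) :=
  exists (B : finType) (pi : FG A -> FG B) (sg : FG B -> FG A) (phi' : FG B -> FG B) (k : nat),
    [/\ is_hom pi, surj pi, is_hom sg, is_hom phi' & injective phi'] /\
    [/\ (forall w, phi' (pi w) = pi (phi w)), (forall w, sg (phi' w) = phi (sg w)) &
        (forall w, sg (pi w) = iter k phi w)].
Arguments CoreSpec : clear implicits.

Lemma core n : forall (A : finType), #|A| <= n -> forall phi, is_hom phi -> CoreSpec A phi.
Proof.
elim: n => [|n IH] A HA phi Hphi.
all: case: (classic (injective phi)) => Hi.
1,3: by exists A, id, id, phi, 0; split; split => // y; exists y.
all: have [Hj|[C [HC [al [be [Ha Sa Hb Hab]]]]]] := NL (fun a => phi (fg_gen a)).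
1,3: by case: Hi => x y E; apply: Hj; rewrite -!hom_ext.
  by move: HC HA; lia.
have Hab' : forall w, be (al w) = phi w by move=> w; rewrite Hab -hom_ext.
have Hpsi : is_hom (fun w => al (be w)) by apply: hom_comp.
have [B [pi [sg [phi' [k [[Hpi Spi Hsg Hphi' Iphi'] [C1 C2 C3]]]]]]] :=
  IH C ltac:(move: HC HA; lia) _ Hpsi.
exists B, (fun w => pi (al w)), (fun w => be (sg w)), phi', k.+1; split; split.
- exact: hom_comp.
- by move=> y; have [x <-] := Spi y; have [w <-] := Sa x; exists w.
- exact: hom_comp.
- done.
- done.
- by move=> w; rewrite C1 Hab'.
- by move=> w; rewrite C2 -Hab'.
- move=> w; rewrite C3.
  have E : forall j v, be (iter j (fun w => al (be w)) v) = iter j phi (be v).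
    by elim=> [|j IHj] v //=; rewrite Hab' IHj.
  by rewrite E Hab' iterSr.
Qed.

Lemma emb_ext (A : eqType) (w : FG A) : emb w = ext (fun a => fg_gen (Some a)) w.
Proof.
apply: fgE => /=; congr red.
elim: (val w) => [|[a b] s IH] //=.
by rewrite IH; case: b.
Qed.

Lemma emb_hom (A : eqType) : is_hom (@emb A).
Proof. by move=> u v; rewrite !emb_ext ext_hom. Qed.

Lemma emb_gen (A : eqType) (a : A) : emb (fg_gen a) = fg_gen (Some a).
Proof. by rewrite emb_ext ext_gen. Qed.

Definition liftt (A B : eqType) (f : FG A -> FG B) : FG (option A) -> FG (option B) :=
  ext (fun o => if o is Some a then emb (f (fg_gen a)) else tt_gen B).

Lemma liftt_hom (A B : eqType) (f : FG A -> FG B) : is_hom (liftt f).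
Proof. exact: ext_hom. Qed.

Lemma liftt_t (A B : eqType) (f : FG A -> FG B) : liftt f (tt_gen A) = tt_gen B.
Proof. by rewrite /liftt /tt_gen ext_gen. Qed.

Lemma liftt_emb (A B : eqType) (f : FG A -> FG B) w : is_hom f -> liftt f (emb w) = emb (f w).
Proof.
move=> Hf; apply: (hom_eq (f := fun w => liftt f (emb w)) (g := fun w => emb (f w))).
- by apply: hom_comp; [apply: emb_hom | apply: liftt_hom].
- by apply: hom_comp => //; apply: emb_hom.
- by move=> a; rewrite emb_gen /liftt ext_gen.
Qed.

Section HNN.
Variables (A : eqType) (R : seq (FG A)) (phi : FG A -> FG A).
Hypothesis Hphi : is_hom phi.
Notation N := (hnnN R phi).
Notation t := (tt_gen A).
Definition cj (x : FG (option A)) := fg_mul (fg_mul (fg_inv t) x) t.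

Lemma cj_hom : is_hom cj.
Proof. by move=> u v; rewrite /cj -!fmulA fmulKVg. Qed.

Lemma cj_t : cj t = t.
Proof. by rewrite /cj fmulVg fmul1g. Qed.

Lemma cj_peq x y : peq N x y -> peq N (cj x) (cj y).
Proof. by move=> H; apply: peq_mul; [apply: peq_mul => //|]; apply: peq_refl. Qed.

Lemma N_cj x : N x -> N (cj x).
Proof. by move=> H; rewrite /cj -fmulA; apply: ncl_conj. Qed.

Lemma cj_N x : N (cj x) -> N x.
Proof. by move/(ncl_conjr t); rewrite /cj -!fmulA fmulKVg fmulgV fmulg1. Qed.

Lemma conj_rel w : peq N (cj (emb w)) (emb (phi w)).
Proof.
apply: (peq_hom (f := fun w => cj (emb w)) (g := fun w => emb (phi w))).
- by apply: hom_comp; [apply: emb_hom | apply: cj_hom].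
- by apply: hom_comp => //; apply: emb_hom.
- move=> a; apply: ncl_base; right; by exists a.
Qed.

Lemma conj_iter k w : peq N (iter k cj (emb w)) (emb (iter k phi w)).
Proof.
elim: k => [|k IH] /=; first exact: peq_refl.
apply: peq_trans (cj_peq IH) _; exact: conj_rel.
Qed.

Lemma N_iter k x : N x -> N (iter k cj x).
Proof. by move=> H; elim: k => [|k IH] //=; apply: N_cj. Qed.

Lemma iter_N k x : N (iter k cj x) -> N x.
Proof. by elim: k x => [|k IH] x //= /cj_N /IH. Qed.

End HNN.

Theorem lemma4p8 (A : finType) (R : seq (FG A)) (phi : FG A -> FG A) :
  is_hom phi ->
  exists (B : finType) (R' : seq (FG B)) (phi' : FG B -> FG B)
         (rho rho' : FG (option A) -> FG (option B)),
    [/\ is_hom phi', injective phi' &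
        quot_iso (hnnN R phi) (hnnN R' phi') rho] /\
    [/\ is_hom rho', surj rho',
        rho' (tt_gen A) = tt_gen B,
        (forall w, peq (hnnN R' phi') (rho' w) (rho w)) &
        [/\ map rho' (map (@emb A) R) =i map (@emb B) R',
            (forall v, (exists2 w, ncl (fun x => x \in R) w & rho' (emb w) = v) <->
                       (exists2 u, ncl (fun x => x \in R') u & emb u = v)) &
            (forall v, (exists2 w, ncl (fun x => x \in map (@emb A) R) w & rho' w = v) <->
                       ncl (fun x => x \in map (@emb B) R') v)]].
Proof.
move=> Hphi.
have [B [pi [sg [phi' [k [[Hpi Spi Hsg Hphi' Iphi'] [C1 C2 C3]]]]]]] := core (leqnn #|A|) Hphi.
pose R' := map pi R.
pose rho' := liftt pi.
pose sgh := liftt sg.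
have Hr : is_hom rho' := liftt_hom pi.
have Hs : is_hom sgh := liftt_hom sg.
have rho_emb : forall w, rho' (emb w) = emb (pi w) := fun w => liftt_emb w Hpi.
have sg_emb : forall w, sgh (emb w) = emb (sg w) := fun w => liftt_emb w Hsg.
have rho_t : rho' (tt_gen A) = tt_gen B := liftt_t pi.
have sg_t : sgh (tt_gen B) = tt_gen A := liftt_t sg.
have NN' : forall x, hnnN R phi x -> hnnN R' phi' (rho' x).
  apply: ncl_hom => // s [[r Hr0 ->]|[a ->]].
    rewrite rho_emb; apply: ncl_base; left; exists (pi r) => //; exact: map_f.
  have := conj_rel R' Hphi' (pi (fg_gen a)); rewrite /peq /cj.
  by rewrite !Hr !(homV _ Hr) rho_t !rho_emb C1.
have NN : forall x, hnnN R' phi' x -> hnnN R phi (sgh x).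
  apply: ncl_hom => // s [[r' Hr' ->]|[b ->]].
    rewrite sg_emb; have [r Hr0 ->] := mapP Hr'; rewrite C3.
    apply: (peq_N (peq_sym (conj_iter R Hphi k r))); apply: N_iter.
    by apply: ncl_base; left; exists r.
  have := conj_rel R Hphi (sg (fg_gen b)); rewrite /peq /cj.
  by rewrite !Hs !(homV _ Hs) sg_t !sg_emb C2.
have iter_t : forall j, iter j (@cj A) (tt_gen A) = tt_gen A.
  by elim=> [|j IH] //=; rewrite IH cj_t.
have Comp : forall x, peq (hnnN R phi) (sgh (rho' x)) (iter k (@cj A) x).
  apply: (peq_hom (f := fun x => sgh (rho' x)) (g := iter k (@cj A))).
  - exact: hom_comp.
  - exact: hom_iter (@cj_hom A).
  case=> [a|].
    rewrite -emb_gen rho_emb sg_emb C3; apply: peq_sym; exact: conj_iter.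
  change (fg_gen None) with (tt_gen A); rewrite rho_t sg_t iter_t; exact: peq_refl.
have gen_img : forall o, exists x, rho' x = fg_gen o.
  case=> [b|]; last by exists (tt_gen A); rewrite rho_t.
  have [w Ew] := Spi (fg_gen b); exists (emb w); by rewrite rho_emb Ew emb_gen.
have surj_rho : surj rho'.
  apply: FG_ind; first by exists fg_one; rewrite hom1.
  move=> l w [x Ex]; have [y Ey] := gen_img l.1.
  exists (fg_mul (if l.2 then fg_inv y else y) x); rewrite Hr Ex.
  case: l Ey => o [] /= Ey; rewrite ?lett_inv ?lett_gen -Ey //.
  by rewrite homV.
have Emap : map rho' (map (@emb A) R) = map (@emb B) R'.
  by rewrite -!map_comp; apply: eq_map => r /=; rewrite rho_emb.
exists B, R', phi', rho', rho'; split; split => //.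
- split.
  + by move=> u v H; rewrite /peq -(homV _ Hr) -Hr; apply: NN'.
  + by move=> u v; rewrite Hr; apply: peq_refl.
  + move=> u v; rewrite /peq -(homV _ Hr) -Hr => /NN H.
    apply: (iter_N (k := k)); apply: peq_N H; apply: peq_sym; exact: Comp.
  + by move=> y; have [x <-] := surj_rho y; exists x; apply: peq_refl.
- by move=> w; apply: peq_refl.
- split.
  + by rewrite Emap.
  + move=> v; split.
      case=> w Hw <-; exists (pi w); last by rewrite rho_emb.
      by apply/(ncl_surj _ Hpi Spi); exists w.
    case=> u /(ncl_surj _ Hpi Spi) [w Hw <-] <-; exists w => //.
  + by move=> v; rewrite -Emap; apply: ncl_surj.
Qed.
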